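(* Consider a downlink system with $L$ transmitters, each having $M$ antennas, $K$ single-antenna data receivers and $J$ single-antenna energy receivers. For $k\in\{1,\dots,K\}$ let $\mathbf{h}_k\in\mathbb{C}^{ML\times1}$ and $\mathbf{H}_k=\mathbf{h}_k\mathbf{h}_k^H$; for $j\in\{1,\dots,J\}$ let $\mathbf{g}_j\in\mathbb{C}^{ML\times1}$ and $\mathbf{G}_j=\mathbf{g}_j\mathbf{g}_j^H$. For $l\in\{1,\dots,L\}$ let $\mathbf{A}_l$ be the $ML\times ML$ diagonal matrix with $(l-1)M$ leading zeros, then $M$ ones, then $(L-l)M$ zeros on its diagonal. Fix $\sigma^2>0$, $\eta\in(0,1)$, $Q_{\min}\ge0$, $C_l>0$, $E_l>0$, $\beta_{kl}>0$, $\hat R_k\ge 0$. Let $\mathcal{F}_0$ be the set of tuples of Hermitian matrices $(\{\mathbf{W}_k\}_{k=1}^K,\{\mathbf{V}_j\}_{j=1}^J)$ satisfying (a) $\sum_{i=1}^K\mathrm{tr}(\mathbf{G}_j\mathbf{W}_i)+\sum_{i=1}^J\mathrm{tr}(\mathbf{G}_j\mathbf{V}_i)\ge Q_{\min}/\eta$ for all $j$; (b) $\sum_{k=1}^K\beta_{kl}\,\mathrm{tr}(\mathbf{W}_k\mathbf{A}_l)\,\hat R_k\le C_l$ for all $l$; (c) $\mathbf{W}_k\succeq0$, $\mathbf{V}_j\succeq0$ for all $k,j$. Let (P4) be the problem of maximizing $$\min_{k}\frac{\mathrm{tr}(\mathbf{H}_k\mathbf{W}_k)}{\sum_{i\neq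 k}\mathrm{tr}(\mathbf{H}_k\mathbf{W}_i)+\sum_{i=1}^J\mathrm{tr}(\mathbf{H}_k\mathbf{V}_i)+\sigma^2}$$ over $\mathcal{F}_0$ subject additionally to $\sum_{k=1}^K\mathrm{tr}(\mathbf{W}_k\mathbf{A}_l)+\sum_{j=1}^J\mathrm{tr}(\mathbf{V}_j\mathbf{A}_l)\le E_l$ for all $l$, and let $\gamma_{\max}$ denote its optimal value. For $\gamma>0$, let (P5) be the problem of minimizing $$\max_{l}\frac{\sum_{k=1}^K\mathrm{tr}(\mathbf{W}_k\mathbf{A}_l)+\sum_{j=1}^J\mathrm{tr}(\mathbf{V}_j\mathbf{A}_l)}{E_l}$$ over $\mathcal{F}_0$ subject additionally to $\frac1\gamma\mathrm{tr}(\mathbf{H}_k\mathbf{W}_k)-\sum_{i\ne k}\mathrm{tr}(\mathbf{H}_k\mathbf{W}_i)-\sum_{i=1}^J\mathrm{tr}(\mathbf{H}_k\mathbf{V}_i)-\sigma^2\ge0$ for all $k$, and let $h(\gamma)$ denote its optimal value. Call $\gamma$ achievable if $\gamma\le\gamma_{\max}$. Then a common SINR target $\gamma>0$ is achievable if and only if $h(\gamma)\le 1$.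
   Context: $\mathrm{tr}$ denotes trace and $\succeq0$ positive semidefiniteness. The ratio in (P4) is the signal-to-interference-plus-noise ratio (SINR) of data receiver $k$ under the relaxed beamforming covariances $\mathbf{W}_k$ (data) and $\mathbf{V}_j$ (energy); $h(\gamma)$ is the minimum weighted peak transmit power needed to give every data receiver SINR at least $\gamma$. *)

(* Defs.v *)
From mathcomp Require Import all_boot all_order all_algebra.
From mathcomp Require Import complex.
From mathcomp Require Import boolp classical_sets reals constructive_ereal ereal.
Set Implicit Arguments. Unset Strict Implicit. Unset Printing Implicit Defensive.
Import Order.TTheory GRing.Theory Num.Theory.
Local Open Scope ring_scope.
Local Open Scope classical_set_scope.

Section Defs.
Variable R : realType.
Local Notation C := (R[i]).

Definition adjmx m n (A : 'M[C]_(m, n)) : 'M[C]_(n, m) := (map_mx conjc A)^T.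

Definition hermitian n (W : 'M[C]_n) : Prop := adjmx W = W.

Definition psd n (W : 'M[C]_n) : Prop :=
  hermitian W /\ forall x : 'cV[C]_n, 0 <= (adjmx x *m W *m x) 0 0.

(* real part of tr(A B) (the traces occurring below are real) *)
Definition rtr n (A B : 'M[C]_n) : R := complex.Re (\tr (A *m B)).

Variables (L M K J : nat).
Local Notation N := (M * L)%N.

(* A_l (0-indexed l): ones on the diagonal positions l*M .. (l+1)*M - 1 *)
Definition Amat (l : 'I_L) : 'M[C]_N :=
  \matrix_(i, j) (if (i == j) && (l * M <= i < l.+1 * M)%N then 1 else 0).

Definition outer (h : 'cV[C]_N) : 'M[C]_N := h *m adjmx h.

Variables (h : 'I_K -> 'cV[C]_N) (g : 'I_J -> 'cV[C]_N)
  (sigma2 eta Qmin : R) (Cl El : 'I_L -> R) (beta : 'I_K -> 'I_L -> R)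
  (Rhat : 'I_K -> R).

Definition F0 (W : 'I_K -> 'M[C]_N) (V : 'I_J -> 'M[C]_N) : Prop :=
  [/\ (forall j, Qmin / eta <= \sum_i rtr (outer (g j)) (W i)
                             + \sum_i rtr (outer (g j)) (V i)),
      (forall l, \sum_k beta k l * rtr (W k) (Amat l) * Rhat k <= Cl l),
      (forall k, psd (W k)) & (forall j, psd (V j))].

Definition load (W : 'I_K -> 'M[C]_N) (V : 'I_J -> 'M[C]_N) (l : 'I_L) : R :=
  \sum_k rtr (W k) (Amat l) + \sum_j rtr (V j) (Amat l).

Definition interf (W : 'I_K -> 'M[C]_N) (V : 'I_J -> 'M[C]_N) (k : 'I_K) : R :=
  \sum_(i | i != k) rtr (outer (h k)) (W i) + \sum_i rtr (outer (h k)) (V i).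

Definition sinr W V (k : 'I_K) : R :=
  rtr (outer (h k)) (W k) / (interf W V k + sigma2).

Definition obj4 W V : \bar R := \big[Order.min/+oo%E]_k (sinr W V k)%:E.

Definition gamma_max : \bar R :=
  ereal_sup [set x | exists W V,
    (F0 W V /\ forall l, load W V l <= El l) /\ x = obj4 W V].

Definition obj5 W V : \bar R := \big[Order.max/-oo%E]_l (load W V l / El l)%:E.

Definition hfun (gamma : R) : \bar R :=
  ereal_inf [set x | exists W V,
    (F0 W V /\ forall k,
       gamma^-1 * rtr (outer (h k)) (W k) - interf W V k - sigma2 >= 0)
    /\ x = obj5 W V].

End Defs.

(* Main.v *)
Require Import Defs.
From mathcomp Require Import all_boot all_order all_algebra.
From mathcomp Require Import complex.
From mathcomp Require Import boolp classical_sets reals constructive_ereal ereal.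
From mathcomp Require Import topology normedtype sequences.
From mathcomp Require Import lra.
Import Order.TTheory GRing.Theory Num.Theory.
Local Open Scope ring_scope.
Import numFieldNormedType.Exports.
Local Open Scope classical_set_scope.

Section Aux.
Variable R : realType.

Lemma ge_cvg (f : nat -> R) (l a : R) : f @ \oo --> l -> (forall k, a <= f k) -> a <= l.
Proof. move=> fl H; apply: (ler_cvg_to (cvg_cst a) fl); exact: nearW. Qed.

Lemma le_cvg (f : nat -> R) (l a : R) : f @ \oo --> l -> (forall k, f k <= a) -> l <= a.
Proof. move=> fl H; apply: (ler_cvg_to fl (cvg_cst a)); exact: nearW. Qed.

Lemma cvg_sumR (I : finType) (P : pred I) (f : I -> nat -> R) (l : I -> R) :
  (forall i, f i @ \oo --> l i) ->
  (fun k => \sum_(i | P i) f i k) @ \oo --> \sum_(i | P i) l i.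
Proof.
move=> H; apply: cvg_big => //; first exact: add_continuous.
Qed.

Lemma increasing_ge (p : nat -> nat) : {mono p : n m / (n <= m)%N >-> (n <= m)%O} -> forall n, (n <= p n)%N.
Proof.
move=> hp; elim=> // n IH.
have : (p n < p n.+1)%N.
  rewrite ltnNge; apply/negP => H.
  have := hp n.+1 n; rewrite ltnn; move=> E.
  by move: H; change (is_true (p n.+1 <= p n)%O -> False); rewrite E.
by apply: leq_ltn_trans.
Qed.

Lemma cvg_subseq (p : nat -> nat) (u : nat -> R) (l : R) :
  {mono p : n m / (n <= m)%N >-> (n <= m)%O} -> u @ \oo --> l -> (u \o p) @ \oo --> l.
Proof.
move=> hp ul; apply: cvg_comp ul.
move=> P [N _ HN]; exists N => // n /= Nn; apply: HN => /=.
move: Nn; rewrite /= => Nn; apply: (leq_trans Nn); exact: increasing_ge.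
Qed.


Arguments cvg_subseq {p u l}.

Lemma BW_fin (I : finType) (u : nat -> I -> R) (B : R) :
  (forall n i, `|u n i| <= B) ->
  exists p : nat -> nat, exists c : I -> R,
    {mono p : n m / (n <= m)%N >-> (n <= m)%O} /\
    forall i, (fun n => u (p n) i) @ \oo --> c i.
Proof.
move=> HB.
suff H : forall s : seq I, exists p : nat -> nat, exists c : I -> R,
    {mono p : n m / (n <= m)%N >-> (n <= m)%O} /\
    forall i, i \in s -> (fun n => u (p n) i) @ \oo --> c i.
  have [p [c [hp hc]]] := H (enum I).
  by exists p, c; split => // i; apply: hc; rewrite mem_enum.
elim=> [|i s [p [c [hp hc]]]].
  by exists id, (fun=> 0); split.
have bnd : bounded_fun (fun n => u (p n) i).
  exists B; split; first exact: num_real.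
  by move=> M BM x _; apply: le_trans (HB _ _) (ltW BM).
have [q hq cq] := bolzano_weierstrass bnd.
exists (p \o q), (fun j => if j == i then lim ((fun n => u (p n) i) \o q @ \oo) else c j).
split.
  by move=> n m /=; rewrite hp; exact: hq.
move=> j; rewrite inE; case: eqP => [-> _|_ /= js].
  exact: cq.
exact: (@cvg_subseq q (fun n => u (p n) j)) (hc _ js).
Qed.


Lemma cvgD' (f g : nat -> R) (a b : R) : f @ \oo --> a -> g @ \oo --> b ->
  (fun k => f k + g k) @ \oo --> a + b.
Proof. exact: cvgD. Qed.
Lemma cvgB' (f g : nat -> R) (a b : R) : f @ \oo --> a -> g @ \oo --> b ->
  (fun k => f k - g k) @ \oo --> a - b.
Proof. exact: cvgB. Qed.
Lemma cvgM' (f g : nat -> R) (a b : R) : f @ \oo --> a -> g @ \oo --> b ->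
  (fun k => f k * g k) @ \oo --> a * b.
Proof. exact: cvgM. Qed.
Lemma cvgMc (f : nat -> R) (c a : R) : f @ \oo --> a ->
  (fun k => c * f k) @ \oo --> c * a.
Proof. by move=> H; apply: cvgM' => //; exact: cvg_cst. Qed.

Local Notation C := R[i].
Local Notation Re := (@complex.Re R).
Local Notation Im := (@complex.Im R).

Lemma ReD (a b : C) : Re (a + b) = Re a + Re b. Proof. by case: a => ? ?; case: b. Qed.
Lemma ImD (a b : C) : Im (a + b) = Im a + Im b. Proof. by case: a => ? ?; case: b. Qed.
Lemma ReM (a b : C) : Re (a * b) = Re a * Re b - Im a * Im b.
Proof. by case: a => ? ?; case: b. Qed.
Lemma ImM (a b : C) : Im (a * b) = Re a * Im b + Im a * Re b.
Proof. by case: a => ? ?; case: b => ? ? /=; rewrite addrC. Qed.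
Lemma Re_sum (I : Type) (r : seq I) (P : pred I) (F : I -> C) :
  Re (\sum_(i <- r | P i) F i) = \sum_(i <- r | P i) Re (F i).
Proof. by apply: (big_morph _ ReD). Qed.
Lemma Im_sum (I : Type) (r : seq I) (P : pred I) (F : I -> C) :
  Im (\sum_(i <- r | P i) F i) = \sum_(i <- r | P i) Im (F i).
Proof. by apply: (big_morph _ ImD). Qed.


Lemma lim_eq (f g : nat -> R) (a b : R) : f @ \oo --> a -> g @ \oo --> b ->
  (forall k, f k = g k) -> a = b.
Proof.
move=> fa gb E; apply/eqP; rewrite eq_le; apply/andP; split.
  by apply: (ler_cvg_to fa gb); apply: nearW => k; rewrite E.
by apply: (ler_cvg_to gb fa); apply: nearW => k; rewrite E.
Qed.

Arguments lim_eq {f g a b}.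
Arguments ge_cvg {f l a}.
Arguments le_cvg {f l a}.

Section Mx.
Variable n : nat.

Definition mcvg (Xn : nat -> 'M[C]_n) (X : 'M[C]_n) :=
  forall i j, (fun k => Re (Xn k i j)) @ \oo --> Re (X i j) /\
              (fun k => Im (Xn k i j)) @ \oo --> Im (X i j).

Lemma cvg_linRe (c : 'I_n -> 'I_n -> C) Xn X : mcvg Xn X ->
  (fun k => Re (\sum_i \sum_j c i j * Xn k i j)) @ \oo -->
    Re (\sum_i \sum_j c i j * X i j).
Proof.
move=> H.
have E : forall Y : 'M[C]_n, Re (\sum_i \sum_j c i j * Y i j) =
   \sum_i \sum_j (Re (c i j) * Re (Y i j) - Im (c i j) * Im (Y i j)).
  move=> Y; rewrite Re_sum; apply: eq_bigr => i _; rewrite Re_sum.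
  by apply: eq_bigr => j _; rewrite ReM.
rewrite E; have -> : (fun k => Re (\sum_i \sum_j c i j * Xn k i j)) =
   (fun k => \sum_i \sum_j (Re (c i j) * Re (Xn k i j) - Im (c i j) * Im (Xn k i j))).
  by apply: funext => k; rewrite E.
apply: cvg_sumR => i; apply: cvg_sumR => j.
by apply: cvgB'; apply: cvgMc; have [] := H i j.
Qed.

Lemma cvg_linIm (c : 'I_n -> 'I_n -> C) Xn X : mcvg Xn X ->
  (fun k => Im (\sum_i \sum_j c i j * Xn k i j)) @ \oo -->
    Im (\sum_i \sum_j c i j * X i j).
Proof.
move=> H.
have E : forall Y : 'M[C]_n, Im (\sum_i \sum_j c i j * Y i j) =
   \sum_i \sum_j (Re (c i j) * Im (Y i j) + Im (c i j) * Re (Y i j)).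
  move=> Y; rewrite Im_sum; apply: eq_bigr => i _; rewrite Im_sum.
  by apply: eq_bigr => j _; rewrite ImM.
rewrite E; have -> : (fun k => Im (\sum_i \sum_j c i j * Xn k i j)) =
   (fun k => \sum_i \sum_j (Re (c i j) * Im (Xn k i j) + Im (c i j) * Re (Xn k i j))).
  by apply: funext => k; rewrite E.
apply: cvg_sumR => i; apply: cvg_sumR => j.
by apply: cvgD'; apply: cvgMc; have [] := H i j.
Qed.

Lemma rtrE (A W : 'M[C]_n) : rtr A W = Re (\sum_i \sum_j A j i * W i j).
Proof.
rewrite /rtr /mxtrace; congr Re; rewrite [RHS]exchange_big /=.
by apply: eq_bigr => i _; rewrite mxE.
Qed.


Lemma quad_sum (x : 'cV[C]_n) (Y : 'M[C]_n) :
  (adjmx x *m Y *m x) 0 0 = \sum_i \sum_j (conjc (x i 0) * x j 0) * Y i j.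
Proof.
rewrite mxE; under eq_bigr do rewrite mxE mulr_suml.
rewrite exchange_big /=; apply: eq_bigr => i _; apply: eq_bigr => j _.
by rewrite /adjmx !mxE mulrAC.
Qed.

Lemma delta_quad (Y : 'M[C]_n) (a b : 'I_n) :
  ((delta_mx 0 a : 'rV[C]_n) *m Y *m (delta_mx b 0 : 'cV[C]_n)) 0 0 = Y a b.
Proof. by rewrite -rowE -colE !mxE. Qed.

Lemma add00 (A B : 'M[C]_1) : (A + B) 0 0 = A 0 0 + B 0 0.
Proof. by rewrite mxE. Qed.
Lemma scale00 (a : C) (A : 'M[C]_1) : (a *: A) 0 0 = a * A 0 0.
Proof. by rewrite mxE. Qed.

Lemma quad2 (Y : 'M[C]_n) (v : C) i j :
  let x : 'cV[C]_n := delta_mx i 0 + v *: delta_mx j 0 in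
  (adjmx x *m Y *m x) 0 0 =
    Y i i + v * Y i j + conjc v * Y j i + conjc v * v * Y j j.
Proof.
move=> x.
have A1 : adjmx x = (delta_mx 0 i + conjc v *: delta_mx 0 j : 'rV[C]_n).
  apply/matrixP => a b; rewrite /adjmx !mxE rmorphD rmorphM !rmorph_nat.
  by rewrite [(b == i) && _]andbC [(b == j) && _]andbC.
rewrite A1 /x !mulmxDl !mulmxDr -?scalemxAl -?scalemxAr -?scalemxAl -?scalemxAr -?scalemxAl -?scalemxAr.
rewrite !add00 !scale00 !delta_quad.
by rewrite !addrA !mulrA.
Qed.

Lemma psd_closed Xn X : mcvg Xn X -> (forall k, psd (Xn k)) -> psd X.
Proof.
move=> H P; split.
  rewrite /Defs.hermitian; apply/matrixP => i j; rewrite /adjmx !mxE.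
  have hk k : conjc (Xn k j i) = Xn k i j.
    have [h _] := P k; have := congr1 (fun M : 'M[C]_n => M i j) (h : adjmx (Xn k) = Xn k).
    by rewrite /adjmx !mxE.
  have [hr1 hi1] := H j i; have [hr2 hi2] := H i j.
  have e1 : Re (X j i) = Re (X i j).
    by apply: (lim_eq hr1 hr2) => k; rewrite -hk; case: (Xn k j i).
  have e2 : - Im (X j i) = Im (X i j).
    have hi1' : (fun k => - Im (Xn k j i)) @ \oo --> - Im (X j i) by apply: cvgN.
    by apply: (lim_eq hi1' hi2) => k; rewrite -hk; case: (Xn k j i).
  by move: e1 e2; case: (X j i) => a b; case: (X i j) => c d /= -> <-.
move=> x; rewrite lecE quad_sum; apply/andP; split.
  apply/eqP; apply: (lim_eq (cvg_linIm _ _ _ H) (cvg_cst (complex.Im (0:C)))) => k.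
  by have := (P k).2 x; rewrite lecE quad_sum => /andP[/eqP -> _].
apply: (ge_cvg (cvg_linRe _ _ _ H)) => k.
by have := (P k).2 x; rewrite lecE quad_sum => /andP[_].
Qed.

Lemma rtrC (A B : 'M[C]_n) : rtr A B = rtr B A.
Proof. by rewrite /rtr mxtrace_mulC. Qed.

Lemma rtr_outer_ge0 (hv : 'cV[C]_n) W : psd W -> 0 <= rtr (hv *m adjmx hv) W.
Proof.
move=> P; rewrite /rtr -mulmxA mxtrace_mulC trace_mx11.
by have := P.2 hv; rewrite lecE => /andP[_].
Qed.

Lemma psd_bounds (Y : 'M[C]_n) : psd Y -> forall i j, 0 <= Re (Y i i) /\
  `|Re (Y i j)| <= Re (Y i i) + Re (Y j j) /\
  `|Im (Y i j)| <= Re (Y i i) + Re (Y j j).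
Proof.
move=> P i j.
have hk : conjc (Y j i) = Y i j.
  by have := congr1 (fun M : 'M[C]_n => M i j) (P.1 : adjmx Y = Y); rewrite /adjmx !mxE.
have e1 : Re (Y j i) = Re (Y i j) by rewrite -hk; case: (Y j i).
have e2 : Im (Y j i) = - Im (Y i j) by rewrite -hk; case: (Y j i) => ? ? /=; rewrite opprK.
have Q v : 0 <= Re (Y i i + v * Y i j + conjc v * Y j i + conjc v * v * Y j j).
  by have := P.2 (delta_mx i 0 + v *: delta_mx j 0); rewrite quad2 lecE => /andP[_].
have Q0 := Q (Complex 0 0); have Q1 := Q (Complex 1 0); have Q2 := Q (Complex (-1) 0).
have Q3 := Q (Complex 0 1); have Q4 := Q (Complex 0 (-1)).
move: Q0 Q1 Q2 Q3 Q4; rewrite !ReD !ReM /= e1 e2 => Q0 Q1 Q2 Q3 Q4.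
rewrite !ler_norml.
have Qi : 0 <= Re (Y i i).
  by have := P.2 (delta_mx i 0); rewrite -[delta_mx i 0]addr0 -(scale0r (delta_mx j 0)) quad2 lecE => /andP[_]; rewrite !ReD !ReM /=; lra.
split=> //; split; apply/andP; split; lra.
Qed.

End Mx.
Arguments psd_bounds {n Y}.
Arguments mcvg {n}.
Arguments psd_closed {n Xn X}.
Arguments cvg_linRe {n} c {Xn X}.
Arguments cvg_linIm {n} c {Xn X}.

Section Blocks.
Variables (L M : nat).
Local Notation N := (M * L)%N.

Lemma rtrA (W : 'M[C]_N) (l : 'I_L) : rtr W (Amat R M l) =
  \sum_(i : 'I_N) (if (l * M <= i < l.+1 * M)%N then Re (W i i) else 0).
Proof.
rewrite /rtr /mxtrace Re_sum; apply: eq_bigr => i _; rewrite mxE (bigD1 i) //=.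
rewrite big1 ?addr0; last first.
  by move=> j ji; rewrite mxE (negbTE ji) /= mulr0.
rewrite mxE eqxx /=; case: ifP => _; first by rewrite mulr1.
by rewrite mulr0.
Qed.

Lemma rtrA_ge0 (W : 'M[C]_N) l : psd W -> 0 <= rtr W (Amat R M l).
Proof.
move=> P; rewrite rtrA; apply: sumr_ge0 => i _; case: ifP => // _.
by have [] := psd_bounds P i i.
Qed.

Lemma diag_le_rtrA (W : 'M[C]_N) (i : 'I_N) : (0 < M)%N -> psd W ->
  exists l : 'I_L, Re (W i i) <= rtr W (Amat R M l).
Proof.
move=> M0 P.
have lt : (i %/ M < L)%N by rewrite ltn_divLR // [(L * M)%N]mulnC.
exists (Ordinal lt); rewrite rtrA (bigD1 i) //= leq_divM ltn_ceil //= lerDl.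
apply: sumr_ge0 => j _; case: ifP => // _.
by have [] := psd_bounds P j j.
Qed.

End Blocks.

Lemma le_lim2 (f g : nat -> R) (a b : R) : f @ \oo --> a -> g @ \oo --> b ->
  (forall k, f k <= g k) -> a <= b.
Proof. by move=> fa gb H; apply: (ler_cvg_to fa gb); apply: nearW. Qed.
Arguments le_lim2 {f g a b}.

Lemma cvg_rtr n (A : 'M[C]_n) Xn X : mcvg Xn X ->
  (fun k => rtr A (Xn k)) @ \oo --> rtr A X.
Proof.
move=> H; rewrite rtrE.
have -> : (fun k => rtr A (Xn k)) = (fun k => Re (\sum_i \sum_j A j i * Xn k i j)).
  by apply: funext => k; rewrite rtrE.
exact: cvg_linRe.
Qed.

Lemma cvg_rtr' n (A : 'M[C]_n) Xn X : mcvg Xn X ->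
  (fun k => rtr (Xn k) A) @ \oo --> rtr X A.
Proof.
move=> H; rewrite rtrC.
have -> : (fun k => rtr (Xn k) A) = (fun k => rtr A (Xn k)).
  by apply: funext => k; rewrite rtrC.
exact: cvg_rtr.
Qed.


Arguments diag_le_rtrA {L M W} i.
Arguments rtrA_ge0 {L M W} l.

Lemma cvg_sum_rtr n (I : finType) (P : pred I) (A : 'M[C]_n)
  (Xn : nat -> I -> 'M[C]_n) (X : I -> 'M[C]_n) :
  (forall i, mcvg (fun k => Xn k i) (X i)) ->
  (fun k => \sum_(i | P i) rtr A (Xn k i)) @ \oo --> \sum_(i | P i) rtr A (X i).
Proof. by move=> H; apply: cvg_sumR => i; apply: cvg_rtr. Qed.

Lemma cvg_sum_rtr' n (I : finType) (P : pred I) (A : 'M[C]_n)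
  (Xn : nat -> I -> 'M[C]_n) (X : I -> 'M[C]_n) :
  (forall i, mcvg (fun k => Xn k i) (X i)) ->
  (fun k => \sum_(i | P i) rtr (Xn k i) A) @ \oo --> \sum_(i | P i) rtr (X i) A.
Proof. by move=> H; apply: cvg_sumR => i; apply: cvg_rtr'. Qed.

Section Main.
Variables (L M K J : nat) (h : 'I_K -> 'cV[C]_(M * L)) (g : 'I_J -> 'cV[C]_(M * L))
  (sigma2 eta Qmin : R) (Cl El : 'I_L -> R) (beta : 'I_K -> 'I_L -> R)
  (Rhat : 'I_K -> R).
Hypotheses (M0 : (0 < M)%N) (El0 : forall l, 0 < El l).
Local Notation N := (M * L)%N.

Lemma load_ge_W (W : 'I_K -> 'M[C]_N) (V : 'I_J -> 'M[C]_N) l k :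
  (forall k, psd (W k)) -> (forall j, psd (V j)) ->
  rtr (W k) (Amat R M l) <= load W V l.
Proof.
move=> PW PV; rewrite /load (bigD1 k) //= -addrA lerDl.
by apply: addr_ge0; apply: sumr_ge0 => *; apply: rtrA_ge0.
Qed.

Lemma load_ge_V (W : 'I_K -> 'M[C]_N) (V : 'I_J -> 'M[C]_N) l j :
  (forall k, psd (W k)) -> (forall j, psd (V j)) ->
  rtr (V j) (Amat R M l) <= load W V l.
Proof.
move=> PW PV; rewrite /load (bigD1 j) //= addrCA lerDl.
by apply: addr_ge0; apply: sumr_ge0 => *; apply: rtrA_ge0.
Qed.

Lemma interf_ge0 (W : 'I_K -> 'M[C]_N) (V : 'I_J -> 'M[C]_N) k :
  (forall k, psd (W k)) -> (forall j, psd (V j)) -> 0 <= interf h W V k.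
Proof.
move=> PW PV; rewrite /interf.
by apply: addr_ge0; apply: sumr_ge0 => *; apply: rtr_outer_ge0.
Qed.

Lemma cvg_load (Wn : nat -> 'I_K -> 'M[C]_N) (Vn : nat -> 'I_J -> 'M[C]_N) (W : 'I_K -> 'M[C]_N) (V : 'I_J -> 'M[C]_N) (l : 'I_L) :
  (forall k, mcvg (fun n => Wn n k) (W k)) -> (forall j, mcvg (fun n => Vn n j) (V j)) ->
  (fun n => load (Wn n) (Vn n) l) @ \oo --> load W V l.
Proof. by move=> HW HV; rewrite /load; apply: cvgD'; apply: cvg_sum_rtr'. Qed.

Lemma cvg_interf (Wn : nat -> 'I_K -> 'M[C]_N) (Vn : nat -> 'I_J -> 'M[C]_N) (W : 'I_K -> 'M[C]_N) (V : 'I_J -> 'M[C]_N) k :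
  (forall k, mcvg (fun n => Wn n k) (W k)) -> (forall j, mcvg (fun n => Vn n j) (V j)) ->
  (fun n => interf h (Wn n) (Vn n) k) @ \oo --> interf h W V k.
Proof. by move=> HW HV; rewrite /interf; apply: cvgD'; apply: cvg_sum_rtr. Qed.


Lemma limit_point (Wn : nat -> 'I_K -> 'M[C]_N) (Vn : nat -> 'I_J -> 'M[C]_N)
  (an bn : nat -> R) (a b : R) :
  an @ \oo --> a -> bn @ \oo --> b -> (forall n, an n <= 2) ->
  (forall n, F0 g eta Qmin Cl beta Rhat (Wn n) (Vn n)) ->
  (forall n l, load (Wn n) (Vn n) l <= an n * El l) ->
  (forall n k, bn n * (interf h (Wn n) (Vn n) k + sigma2) <= rtr (outer (h k)) (Wn n k)) ->
  exists W V, F0 g eta Qmin Cl beta Rhat W V /\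
    (forall l, load W V l <= a * El l) /\
    (forall k, b * (interf h W V k + sigma2) <= rtr (outer (h k)) (W k)).
Proof.
move=> ha hb a2 HF Hload Hs.
have PW n k : psd (Wn n k) by case: (HF n).
have PV n j : psd (Vn n j) by case: (HF n).
pose B0 := \sum_l 2 * El l.
have EB l : 2 * El l <= B0.
  rewrite /B0 (bigD1 l) //= lerDl.
  by apply: sumr_ge0 => i _; apply: mulr_ge0 => //; apply: ltW.
have EB' n l : load (Wn n) (Vn n) l <= B0.
  apply: le_trans (Hload n l) _; apply: le_trans _ (EB l).
  by apply: ler_wpM2r; [apply: ltW | apply: a2].
have dW n k i : Re (Wn n k i i) <= B0.
  have [l Hl] := diag_le_rtrA i M0 (PW n k).
  by apply: le_trans Hl (le_trans (load_ge_W _ _ l k (PW n) (PV n)) (EB' n l)).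
have dV n j i : Re (Vn n j i i) <= B0.
  have [l Hl] := diag_le_rtrA i M0 (PV n j).
  by apply: le_trans Hl (le_trans (load_ge_V _ _ l j (PW n) (PV n)) (EB' n l)).
pose u n (x : ((('I_K * 'I_N * 'I_N) + ('I_J * 'I_N * 'I_N)) * bool)%type) : R :=
  match x with
  | (inl (k, i, j), true) => Re (Wn n k i j)
  | (inl (k, i, j), false) => Im (Wn n k i j)
  | (inr (k, i, j), true) => Re (Vn n k i j)
  | (inr (k, i, j), false) => Im (Vn n k i j)
  end.
have ub n x : `|u n x| <= B0 + B0.
  case: x => [[[[k i] j]|[[k i] j]] []] /=.
  - have [_ [H _]] := psd_bounds (PW n k) i j.
    by apply: le_trans H _; apply: lerD.
  - have [_ [_ H]] := psd_bounds (PW n k) i j.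
    by apply: le_trans H _; apply: lerD.
  - have [_ [H _]] := psd_bounds (PV n k) i j.
    by apply: le_trans H _; apply: lerD.
  - have [_ [_ H]] := psd_bounds (PV n k) i j.
    by apply: le_trans H _; apply: lerD.
have [p [c [hp hc]]] := @BW_fin _ u _ ub.
pose W k : 'M[C]_N := \matrix_(i, j) Complex (c (inl (k, i, j), true)) (c (inl (k, i, j), false)).
pose V k : 'M[C]_N := \matrix_(i, j) Complex (c (inr (k, i, j), true)) (c (inr (k, i, j), false)).
have hW k : mcvg (fun n => Wn (p n) k) (W k).
  move=> i j; rewrite !mxE /=; split.
    exact: (hc (inl (k, i, j), true)).
  exact: (hc (inl (k, i, j), false)).
have hV k : mcvg (fun n => Vn (p n) k) (V k).
  move=> i j; rewrite !mxE /=; split.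
    exact: (hc (inr (k, i, j), true)).
  exact: (hc (inr (k, i, j), false)).
exists W, V; split; last split.
- split.
  + move=> j; apply: (@ge_cvg (fun n => \sum_i rtr (outer (g j)) (Wn (p n) i)
        + \sum_i rtr (outer (g j)) (Vn (p n) i))).
      by apply: cvgD'; apply: cvg_sum_rtr.
    by move=> n; case: (HF (p n)).
  + move=> l; apply: (@le_cvg (fun n => \sum_k beta k l * rtr (Wn (p n) k) (Amat R M l) * Rhat k)).
      apply: cvg_sumR => k; apply: cvgM'; last exact: cvg_cst.
      by apply: cvgMc; apply: cvg_rtr'.
    by move=> n; case: (HF (p n)).
  + by move=> k; apply: (psd_closed (hW k)) => n.
  + by move=> j; apply: (psd_closed (hV j)) => n.
- move=> l; apply: (le_lim2 (cvg_load _ _ _ _ l hW hV)).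
    apply: cvgM'; last exact: cvg_cst.
    exact: (cvg_subseq hp ha).
  by move=> n; apply: Hload.
- move=> k; apply: (@le_lim2 (fun n => bn (p n) * (interf h (Wn (p n)) (Vn (p n)) k + sigma2))
     _ _ _ _ (cvg_rtr _ _ _ _ (hW k))).
    apply: cvgM'; first exact: (cvg_subseq hp hb).
    apply: cvgD'; last exact: cvg_cst.
    exact: (cvg_interf _ _ _ _ k hW hV).
  by move=> n; apply: Hs.
Qed.


Lemma obj4_le (W : 'I_K -> 'M[C]_N) (V : 'I_J -> 'M[C]_N) k :
  (obj4 h sigma2 W V <= (sinr h sigma2 W V k)%:E)%E.
Proof. by rewrite /obj4 (bigD1 k) //= ge_min lexx. Qed.

Lemma le_obj4 (W : 'I_K -> 'M[C]_N) (V : 'I_J -> 'M[C]_N) (x : R) :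
  (forall k, x <= sinr h sigma2 W V k) -> (x%:E <= obj4 h sigma2 W V)%E.
Proof.
move=> H; rewrite /obj4; apply: (big_ind (fun y => (x%:E <= y)%E)) => //.
- exact: leey.
- by move=> y z hy hz; rewrite le_min hy hz.
- by move=> k _; rewrite lee_fin.
Qed.

Lemma obj5_ge (W : 'I_K -> 'M[C]_N) (V : 'I_J -> 'M[C]_N) l :
  ((load W V l / El l)%:E <= obj5 El W V)%E.
Proof. by rewrite /obj5 (bigD1 l) //= le_max lexx. Qed.

Lemma obj5_le (W : 'I_K -> 'M[C]_N) (V : 'I_J -> 'M[C]_N) :
  (forall l, load W V l <= El l) -> (obj5 El W V <= 1%:E)%E.
Proof.
move=> H; rewrite /obj5; apply: (big_ind (fun y => (y <= 1%:E)%E)) => //.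
- exact: leNye.
- by move=> y z hy hz; rewrite ge_max hy hz.
- by move=> l _; rewrite lee_fin ler_pdivrMr // mul1r.
Qed.

End Main.
End Aux.
Arguments limit_point {R L M K J h g sigma2 eta Qmin Cl El beta Rhat} M0 El0 {Wn Vn an bn a b}.
Arguments obj4_le {R L M K J h sigma2} W V k.
Arguments le_obj4 {R L M K J h sigma2 W V x}.
Arguments obj5_ge {R L M K J El} W V l.
Arguments obj5_le {R L M K J El} El0 {W V}.
Arguments interf_ge0 {R L M K J h W V k}.

Theorem lemma2 (R : realType) (L M K J : nat)
  (h : 'I_K -> 'cV[R[i]]_(M * L)) (g : 'I_J -> 'cV[R[i]]_(M * L))
  (sigma2 eta Qmin : R) (Cl El : 'I_L -> R) (beta : 'I_K -> 'I_L -> R)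
  (Rhat : 'I_K -> R) (gamma : R) :
  (0 < L)%N -> (0 < M)%N -> (0 < K)%N ->
  0 < sigma2 -> 0 < eta < 1 -> 0 <= Qmin ->
  (forall l, 0 < Cl l) -> (forall l, 0 < El l) ->
  (forall k l, 0 < beta k l) -> (forall k, 0 <= Rhat k) ->
  0 < gamma ->
  ((gamma%:E <= gamma_max h g sigma2 eta Qmin Cl El beta Rhat)%E <->
   (hfun h g sigma2 eta Qmin Cl El beta Rhat gamma <= 1%:E)%E).
Proof.
move=> L0 M0 K0 s0 _ Q0 C0 E0 b0 R0 g0.
have Dpos (W : 'I_K -> 'M[R[i]]_(M * L)) (V : 'I_J -> 'M[R[i]]_(M * L)) k :
    (forall k, psd (W k)) -> (forall j, psd (V j)) -> 0 < interf h W V k + sigma2.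
  move=> PW PV; apply: (lt_le_trans s0); rewrite lerDr.
  exact: interf_ge0.
split.
- move=> Hg.
  have ex n : exists WV : ('I_K -> 'M[R[i]]_(M * L)) * ('I_J -> 'M[R[i]]_(M * L)),
      F0 g eta Qmin Cl beta Rhat WV.1 WV.2 /\
      (forall l, load WV.1 WV.2 l <= 1 * El l) /\
      (forall k, (gamma - harmonic n) * (interf h WV.1 WV.2 k + sigma2)
                  <= rtr (outer (h k)) (WV.1 k)).
    have : ((gamma - harmonic n)%:E < gamma_max h g sigma2 eta Qmin Cl El beta Rhat)%E.
      by apply: lt_le_trans Hg; rewrite lte_fin ltrBlDr ltrDl harmonic_gt0.
    move/ereal_sup_gt => [y [W [V [[HF HL] ->]]] Hy].
    exists (W, V); split => //; split => [l|k]; first by rewrite mul1r.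
    have PW : forall k, psd (W k) by case: HF.
    have PV : forall j, psd (V j) by case: HF.
    have := lt_le_trans Hy (obj4_le W V k); rewrite lte_fin => /ltW.
    by rewrite /sinr ler_pdivlMr //; apply: Dpos.
  have [f Hf] := choice ex.
  have o2 : (1:R) <= 2 by rewrite ler1n.
  have hb : (fun n => gamma - harmonic n) @ \oo --> gamma.
    by rewrite -[X in _ --> X]subr0; apply: cvgB'; [exact: cvg_cst | exact: cvg_harmonic].
  have [W [V [HF [HL HS]]]] := limit_point M0 E0 (Wn := fun n => (f n).1)
    (Vn := fun n => (f n).2) (cvg_cst (1:R)) hb (fun n => o2)
    (fun n => (Hf n).1) (fun n => (Hf n).2.1) (fun n => (Hf n).2.2).
  have PW : forall k, psd (W k) by case: HF.
  have PV : forall j, psd (V j) by case: HF.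
  apply: (@le_trans _ _ (obj5 El W V)).
    apply: ereal_inf_lbound; exists W, V; split => //; split => // k.
    have := HS k; rewrite -ler_pdivlMl // => H.
    by rewrite -addrA -opprD subr_ge0.
  by apply: (obj5_le E0) => l; rewrite -[El l]mul1r.
- move=> Hh.
  have ex n : exists WV : ('I_K -> 'M[R[i]]_(M * L)) * ('I_J -> 'M[R[i]]_(M * L)),
      F0 g eta Qmin Cl beta Rhat WV.1 WV.2 /\
      (forall l, load WV.1 WV.2 l <= (1 + harmonic n) * El l) /\
      (forall k, gamma * (interf h WV.1 WV.2 k + sigma2)
                  <= rtr (outer (h k)) (WV.1 k)).
    have : (hfun h g sigma2 eta Qmin Cl El beta Rhat gamma < (1 + harmonic n)%:E)%E.
      by apply: le_lt_trans Hh _; rewrite lte_fin ltrDl harmonic_gt0.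
    move/ereal_inf_lt => [y [W [V [[HF HS] ->]]] Hy].
    exists (W, V); split => //; split => [l|k].
      have := le_lt_trans (obj5_ge W V l) Hy; rewrite lte_fin => /ltW.
      by rewrite ler_pdivrMr.
    have := HS k; rewrite -addrA -opprD subr_ge0 => H.
    by rewrite -ler_pdivlMl.
  have [f Hf] := choice ex.
  have ha : (fun n => 1 + harmonic n) @ \oo --> (1 : R).
    by rewrite -[X in _ --> X]addr0; apply: cvgD'; [exact: cvg_cst | exact: cvg_harmonic].
  have a2 n : 1 + harmonic n <= (2 : R).
    rewrite [2]/(1 + 1) lerD2l /= invf_le1 ?ler1n //.
  have [W [V [HF [HL HS]]]] := limit_point M0 E0 (Wn := fun n => (f n).1)
    (Vn := fun n => (f n).2) ha (cvg_cst gamma) a2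
    (fun n => (Hf n).1) (fun n => (Hf n).2.1) (fun n => (Hf n).2.2).
  have PW : forall k, psd (W k) by case: HF.
  have PV : forall j, psd (V j) by case: HF.
  apply: (@le_trans _ _ (obj4 h sigma2 W V)).
    apply: le_obj4 => k.
    by rewrite /sinr ler_pdivlMr ?HS //; apply: Dpos.
  apply: ereal_sup_ubound; exists W, V; split => //; split => // l.
  by rewrite -[El l]mul1r.
Qed.
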